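(* Let $\mathcal{G}=(\mathcal{V}_A\cup\mathcal{V}_T,\mathcal{E},w)$ be a weighted bipartite graph with $|\mathcal{V}_A|\le|\mathcal{V}_T|$ that has at least one maximum matching, and let $e^*\in A(\mathcal{G})$ be a bottleneck edge. Let $\mathcal{G}^-$ be obtained from $\mathcal{G}$ by deleting both endpoints of $e^*$ and all edges incident to them, and $\mathcal{G}^+$ be obtained from $\mathcal{G}$ by deleting only the edge $e^*$; let $e^-\in A(\mathcal{G}^-)$ be a bottleneck edge of $\mathcal{G}^-$. For $\Delta\ge 0$ let $\Lambda_\Delta$ be the set of perturbations $\{\delta_e\}_{e\in\mathcal{E}}$ with $|\delta_e|\le\Delta$ for all $e\in\mathcal{E}$. (i) If $\mathcal{G}^+$ has a maximum matching, with bottleneck edge $e^+\in A(\mathcal{G}^+)$, and $$0\le\Delta\le\tfrac12\min\big(w_{e^*}-w_{e^-},\,w_{e^+}-w_{e^*}\big),$$ then the bottleneck assignment $e^*$ is robust to every perturbation in $\Lambda_\Delta$. (ii) If $\mathcal{G}^+$ has no maximum matching and $0\le\Delta\le\tfrac12(w_{e^*}-w_{e^-})$, then the bottleneck assignment $e^*$ is robust to every perturbation in $\Lambda_\Delta$.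
   Context: A weighted bipartite graph $\mathcal{G}=(\mathcal{V}_A\cup\mathcal{V}_T,\mathcal{E},w)$ has disjoint vertex sets $\mathcal{V}_A,\mathcal{V}_T$, edge set $\mathcal{E}\subseteq\mathcal{V}_A\times\mathcal{V}_T$ and real edge weights $w_e$. A matching is a set of pairwise non-adjacent edges. A maximum matching of such a graph is a matching covering every vertex of the agent side $\mathcal{V}_A$. For a graph $H$ with at least one maximum matching, $b(H)=\min_M\max_{e\in M}w_e$ over maximum matchings $M$ of $H$; a bottleneck edge of $H$ is an edge $e$ with $w_e=b(H)$ lying in some maximum matching $M$ with $\max_{e'\in M}w_{e'}=b(H)$; $A(H)$ is the set of bottleneck edges. Given perturbations $\{\delta_e\}_{e\in\mathcal{E}}\subset\mathbb{R}$, the perturbed graph $\bar{\mathcal{G}}$ has the same vertices and edges as $\mathcal{G}$ and weights $\bar w_e=w_e+\delta_e$. The bottleneck assignment $e^*\in A(\mathcal{G})$ is said to be robust to the perturbation $\{\delta_e\}$ if $e^*\in A(\bar{\mathcal{G}})$. *)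

(* Defs.v *)
From mathcomp Require Import all_boot all_order all_algebra.
Set Implicit Arguments. Unset Strict Implicit. Unset Printing Implicit Defensive.
Import Order.TTheory GRing.Theory Num.Theory.
Local Open Scope ring_scope.

(* Weights are a separate
   function w : A * T -> R (only its values on edges matter). *)
Record bgraph (A T : finType) := BGraph {
  agents : {set A};
  tasks  : {set T};
  edges  : {set A * T} }.

Section Defs.
Variables (A T : finType).
Implicit Types (G : bgraph A T) (M : {set A * T}) (e : A * T).

Definition wf_bgraph G : Prop := edges G \subset setX (agents G) (tasks G).

Definition is_matching G M : Prop :=
  M \subset edges G /\
  forall e1 e2, e1 \in M -> e2 \in M -> e1 != e2 ->
    (e1.1 != e2.1) /\ (e1.2 != e2.2).

Definition max_matching G M : Prop :=
  is_matching G M /\ forall a, a \in agents G -> exists2 e, e \in M & e.1 = a.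

Definition has_max_matching G : Prop := exists M, max_matching G M.

Definition attains_max {R : realDomainType} (w : A * T -> R) M e : Prop :=
  e \in M /\ forall e', e' \in M -> w e' <= w e.

(* b(H) = min_M max_{e in M} w_e over maximum matchings M.
   e is a bottleneck edge of H iff e lies in a maximum matching M whose
   maximum weight is w_e, and w_e = b(H), i.e. w_e is <= the maximum
   weight of every maximum matching. *)
Definition bottleneck_edge {R : realDomainType} G (w : A * T -> R) e : Prop :=
  (exists M, max_matching G M /\ attains_max w M e) /\
  (forall M', max_matching G M' -> exists2 e', e' \in M' & w e <= w e').

Definition del_endpoints G e : bgraph A T :=
  BGraph (agents G :\ e.1) (tasks G :\ e.2)
         [set f in edges G | (f.1 != e.1) && (f.2 != e.2)].

Definition del_edge G e : bgraph A T :=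
  BGraph (agents G) (tasks G) (edges G :\ e).

Definition in_Lambda {R : realDomainType} G (Delta : R) (delta : A * T -> R) : Prop :=
  forall e, e \in edges G -> `|delta e| <= Delta.

Definition robust {R : realDomainType} G (w delta : A * T -> R) e : Prop :=
  bottleneck_edge G (fun f => w f + delta f) e.
End Defs.

(* Main.v *)
Require Import Defs.
From mathcomp Require Import all_boot all_order all_algebra.
From mathcomp Require Import lra.
Import Order.TTheory GRing.Theory Num.Theory.
Set Implicit Arguments. Unset Strict Implicit. Unset Printing Implicit Defensive.
Local Open Scope ring_scope.

Lemma part_exists (R : realFieldType) (A T : finType) (G : bgraph A T)
    (w : A * T -> R) (estar eminus : A * T) (Delta : R) (delta : A * T -> R) :
  estar \in edges G ->
  bottleneck_edge (del_endpoints G estar) w eminus ->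
  2 * Delta <= w estar - w eminus ->
  in_Lambda G Delta delta ->
  exists M, max_matching G M /\ attains_max (fun f => w f + delta f) M estar.
Proof.
move=> Ein [[Mm [[[sub Hm] cov] [_ Hmax]]] _] HD HL.
have subE : forall e, e \in Mm -> [/\ e \in edges G, e.1 != estar.1 & e.2 != estar.2].
  move=> e /(subsetP sub); rewrite /del_endpoints /= inE => /andP[-> /andP[-> ->]].
  by [].
exists (estar |: Mm); split; [split; [split|]|split].
- apply/subsetP => e; rewrite in_setU1 => /orP[/eqP -> //|/subE[]//].
- move=> e1 e2; rewrite !in_setU1 => /orP[/eqP->|H1] /orP[/eqP->|H2] ne.
  + by rewrite eqxx in ne.
  + by case: (subE _ H2) => _ a b; split; rewrite eq_sym.
  + by case: (subE _ H1).
  + exact: Hm.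
- move=> a aG; case: (eqVneq a estar.1) => [->|ne].
    by exists estar; rewrite ?setU11.
  have : a \in agents (del_endpoints G estar) by rewrite /= !inE ne.
  by case/cov => e eM <-; exists e; rewrite // in_setU1 eM orbT.
- exact: setU11.
- move=> e; rewrite in_setU1 => /orP[/eqP->|eM]; first exact: lexx.
  case: (subE _ eM) => eE _ _.
  have := HL _ eE; have := HL _ Ein; rewrite !ler_norml => /andP[h1 h2] /andP[h3 h4].
  have := Hmax _ eM; lra.
Qed.

Lemma robust_of (R : realFieldType) (A T : finType) (G : bgraph A T)
    (w : A * T -> R) (estar eminus : A * T) (Delta : R) (delta : A * T -> R) :
  bottleneck_edge G w estar ->
  bottleneck_edge (del_endpoints G estar) w eminus ->
  2 * Delta <= w estar - w eminus ->
  in_Lambda G Delta delta ->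
  (forall M', max_matching G M' -> estar \notin M' ->
     exists2 e', e' \in M' & w estar + delta estar <= w e' + delta e') ->
  robust G w delta estar.
Proof.
move=> [[M [[[sub _] _] [EM _]]] _] Hm HD HL H.
have Ein : estar \in edges G by exact: (subsetP sub).
split; first exact: (part_exists Ein Hm HD HL).
move=> M' MM'; case: (boolP (estar \in M')) => [Ein'|Nin]; last exact: H.
by exists estar => //; exact: lexx.
Qed.

Lemma del_edge_mm (A T : finType) (G : bgraph A T) (estar : A * T) M :
  max_matching G M -> estar \notin M -> max_matching (del_edge G estar) M.
Proof.
move=> [[sub Hm] cov] nin; split; [split|] => //.
apply/subsetP => e eM; rewrite /del_edge /= !inE (subsetP sub _ eM) andbT.
by apply: contraNneq nin => <-.
Qed.

Theorem theorem1 (R : realFieldType) (A T : finType) (G : bgraph A T)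
    (w : A * T -> R) (estar eminus : A * T) :
  wf_bgraph G ->
  (#|agents G| <= #|tasks G|)%N ->
  has_max_matching G ->
  bottleneck_edge G w estar ->
  bottleneck_edge (del_endpoints G estar) w eminus ->
  (forall (eplus : A * T) (Delta : R),
      has_max_matching (del_edge G estar) ->
      bottleneck_edge (del_edge G estar) w eplus ->
      0 <= Delta ->
      Delta <= 2^-1 * Num.min (w estar - w eminus) (w eplus - w estar) ->
      forall delta : A * T -> R, in_Lambda G Delta delta ->
        robust G w delta estar)
  /\
  (forall Delta : R,
      ~ has_max_matching (del_edge G estar) ->
      0 <= Delta ->
      Delta <= 2^-1 * (w estar - w eminus) ->
      forall delta : A * T -> R, in_Lambda G Delta delta ->
        robust G w delta estar).
Proof.
move=> _ _ _ Hb Hm; split.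
- move=> eplus Delta _ [_ Hp] D0 HD delta HL.
  have ma : Num.min (w estar - w eminus) (w eplus - w estar) <= w estar - w eminus by rewrite ge_min lexx.
  have mb : Num.min (w estar - w eminus) (w eplus - w estar) <= w eplus - w estar by rewrite ge_min lexx orbT.
  apply: (robust_of Hb Hm _ HL); first lra.
  move=> M' MM' nin; have [e' e'M He'] := Hp M' (del_edge_mm MM' nin).
  case: MM' => [[sub _] _]; have eE := subsetP sub _ e'M.
  case: Hb => [[M [[[subM _] _] [EM _]]] _]; have Ein := subsetP subM _ EM.
  exists e' => //.
  have := HL _ eE; have := HL _ Ein; rewrite !ler_norml => /andP[g1 g2] /andP[g3 g4].
  lra.
- move=> Delta Hn D0 HD delta HL.
  apply: (robust_of Hb Hm _ HL); first lra.
  move=> M' MM' nin; exfalso; apply: Hn; exists M'; exact: del_edge_mm.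
Qed.
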